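(* Fix $h\in[H]$ and $(x_h,a_h)\in\mathcal A(\mathcal X_h)$. Let $(\gamma^t_h(x_h,a_h))_{t\in[T]}$ be positive random variables with $\gamma^t_h(x_h,a_h)$ being $\mathcal F_{t-1}$-measurable, let $\tau$ be a stopping time with respect to $(\mathcal F_t)$ with values in $\{0,\dots,T\}$, and let $\gamma'>0$ be a deterministic constant such that $\gamma^t_h(x_h,a_h)\ge\gamma'$ for all $t\le\tau$. Define $\tilde\ell^t_h(x_h,a_h)=\mathbb 1\{x^t_h=x_h,a^t_h=a_h\}(1-r^t_h)/(\mu^t_{1:h}(x_h,a_h)+\gamma^t_h(x_h,a_h))$, $\tilde L^t_h=\sum_{k\le t}\tilde\ell^k_h$ and $L^t_h(x_h,a_h)=\sum_{k\le t}\ell^{\nu^k}_h(x_h,a_h)$. Then for any $\delta'\in(0,1)$, with probability at least $1-\delta'$, $$\tilde L^\tau_h(x_h,a_h)-L^\tau_h(x_h,a_h)\le\frac{\log(1/\delta')}{2\gamma'}.$$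
   Context: Setting: an episodic imperfect-information game with horizon $H$ and perfect recall for the max-player, whose information sets are $\mathcal X=\bigsqcup_h\mathcal X_h$ with action sets $\mathcal A(x)$; $\mathcal A(\mathcal X_h)=\{(x_h,a_h):x_h\in\mathcal X_h,a_h\in\mathcal A(x_h)\}$. For a max-player policy $\mu$, $\mu_{1:h}(x_h,a_h)=\prod_{h'\le h}\mu_{h'}(a_{h'}|x_{h'})$ along the unique history of $(x_h,a_h)$. For a min-player policy $\nu$, $\ell^\nu_h(x_h,a_h)=p^\nu_{1:h}(x_h)(1-r^\nu_h(x_h,a_h))$, where $p^\nu_{1:h}(x_h)$ is the induced reach probability of $x_h$ (for the actions in its history) and $r^\nu_h\in[0,1]$ the expected reward. Over $T$ episodes, the max-player's policy $\mu^t$ and opponent's policy $\nu^t$ are $\mathcal F_{t-1}$-measurable, where $\mathcal F_0$ is trivial and $\mathcal F_t$ is generated by $\nu^1,\dots,\nu^{t+1}$ and all observations (information sets $x^k_h$, actions $a^k_h$, rewards $r^k_h\in[0,1]$) of episodes $k\le t$; conditionally on $\mathcal F_{t-1}$, $\mathbb E[\mathbb 1\{x^t_h=x_h,a^t_h=a_h\}(1-r^t_h)\mid\mathcal F_{t-1}]=\mu^t_{1:h}(x_h,a_h)\ell^{\nu^t}_h(x_h,a_h)$. *)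

(* Defs.v *)
From HB Require Import structures.
From mathcomp Require Import all_boot all_order all_algebra.
From mathcomp Require Import all_classical all_reals all_analysis.
Set Implicit Arguments. Unset Strict Implicit. Unset Printing Implicit Defensive.
Import Order.TTheory GRing.Theory Num.Theory.
Local Open Scope classical_set_scope.
Local Open Scope ring_scope.

Section Defs.
Context {R : realType} {d : measure_display} {Omega : measurableType d}.

Definition Fmeas (G : set (set Omega)) (X : Omega -> R) : Prop :=
  forall B : set R, measurable B -> G (X @^-1` B).

Definition filtration (F : nat -> set (set Omega)) : Prop :=
  [/\ forall t, sigma_algebra setT (F t),
      forall t, F t `<=` measurable &
      forall s t, (s <= t)%N -> F s `<=` F t].

Definition stopping_time (F : nat -> set (set Omega)) (tau : Omega -> nat) : Prop :=
  forall t, F t [set w | (tau w <= t)%N].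

Definition is_cond_exp (P : probability Omega R) (G : set (set Omega))
  (X Y : Omega -> R) : Prop :=
  Fmeas G Y /\
  forall A, G A -> (\int[P]_(w in A) (X w)%:E = \int[P]_(w in A) (Y w)%:E)%E.

Definition ltilde (hit : nat -> set Omega) (r mu gamma : nat -> Omega -> R)
  (t : nat) (w : Omega) : R :=
  \1_(hit t) w * (1 - r t w) / (mu t w + gamma t w).

Definition Ltilde (hit : nat -> set Omega) (r mu gamma : nat -> Omega -> R)
  (t : nat) (w : Omega) : R :=
  \sum_(1 <= k < t.+1) ltilde hit r mu gamma k w.

Definition Lcum (ell : nat -> Omega -> R) (t : nat) (w : Omega) : R :=
  \sum_(1 <= k < t.+1) ell k w.

End Defs.

(* Main.v *)
Require Import Defs.
From HB Require Import structures.
From mathcomp Require Import all_boot all_order all_algebra.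
From mathcomp Require Import all_classical all_reals all_analysis.
From mathcomp Require Import measurable_realfun.
From mathcomp Require Import ring lra zify.
Import Order.TTheory GRing.Theory Num.Theory.
Import numFieldNormedType.Exports.
Local Open Scope classical_set_scope.
Local Open Scope ring_scope.

Section Helpers.
Local Set Implicit Arguments. Local Unset Strict Implicit.

Context {R : realType} {d : measure_display} {Omega : measurableType d}.

Lemma measurable_invR : measurable_fun [set: R] (@GRing.inv R).
Proof.
have eT : [set x : R | x != 0] `|` [set 0] = [set: R].
  apply/seteqP; split => x //= _; case: (eqVneq x 0) => [->|h]; [by right|by left].
have m1 : measurable [set x : R | x != 0] by apply: open_measurable; exact: open_neq.
have h1 : measurable_fun [set x : R | x != 0] (@GRing.inv R).
  apply: open_continuous_measurable_fun; first exact: open_neq.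
  move=> y; rewrite inE /= => y0; exact: inv_continuous.
have h2 : measurable_fun [set (0:R)] (@GRing.inv R) by apply: measurable_fun_set1.
have := proj2 (measurable_funU (@GRing.inv R) m1 (measurable_set1 (0:R))) (conj h1 h2).
by rewrite eT.
Qed.

Lemma gmeas_of (G : set (set Omega)) (A : set Omega) :
  sigma_algebra setT G -> G A -> measurable (A : set (g_sigma_algebraType G)).
Proof. by move=> sG GA; rewrite /measurable /= (sigma_algebra_id sG). Qed.

Lemma chord_exp (a X : R) : 0 <= X <= 1 -> expR (X * a) <= 1 + X * (expR a - 1).
Proof.
case/andP=> X0 X1.
have := @convex_expR R (Itv01 X0 X1) a 0.
rewrite !convRE /= expR0 mulr0 addr0 mulr1.
rewrite /unstable.onem. lra.
Qed.

Let kf (v : R) : R := 1 + v / 2 - (1 - v / 2) * expR v.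

Let dk (v : R) : is_derive v 1 kf ((1 - (1 - v) * expR v) / 2).
Proof.
rewrite /kf.
apply: is_derive_eq.
rewrite !scaler0 ?addr0 ?add0r ?mul1r.  rewrite /GRing.scale /= mulr1. by field.
Qed.

Lemma k_ge0 (v : R) : 0 <= v -> 0 <= kf v.
Proof.
move=> v0.
have -> : 0 = kf 0 by rewrite /kf mul0r subr0 addr0 expR0 mulr1 subrr.
apply: (@ger0_derive1_ndecry R kf 0); last by [].
- by move=> x _; have [] := dk x.
- move=> x _; rewrite derive1E; have [_ ->] := dk x.
  have h1 := expR_ge1Dx (- x).
  have h2 : (1 - x) * expR x <= 1.
    have := ler_wpM2r (expR_ge0 x) h1.
    by rewrite -expRD addNr expR0 addrC.
  apply: divr_ge0 => //; lra.
- have ck : continuous kf.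
    move=> x; apply: differentiable_continuous; apply/derivable1_diffP.
    by have [] := dk x.
  exact: continuous_subspaceT ck.
- by [].
Qed.


Lemma cmu_le (m g : R) : 0 <= m -> 0 < g -> m * (expR (2 * g / (m + g)) - 1) <= 2 * g.
Proof.
move=> m0 g0.
have mg0 : 0 < m + g by lra.
have := k_ge0 (divr_ge0 (mulr_ge0 (ler0n _ 2) (ltW g0)) (ltW mg0)).
rewrite /kf => h.
have := mulr_ge0 (ltW mg0) h.
set v := 2 * g / (m + g).
have hv : (m + g) * (v / 2) = g by rewrite /v; field; lra.
have hv2 : (m + g) * (v / 2) * expR v = g * expR v by rewrite hv.
move=> h2; nra.
Qed.

Lemma step_a (z x m gm g l : R) : 0 <= z -> 0 <= x <= 1 -> 0 <= m -> 0 < g -> g <= gm ->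
  z * expR (2 * g * (x / (m + gm) - l)) <=
  z * expR ((- (2 * g)) * l) + z * expR ((- (2 * g)) * l) * (expR (2 * g / (m + g)) - 1) * x.
Proof.
move=> z0 /andP[x0 x1] m0 g0 ggm.
have mg : 0 < m + g by lra.
have mgm : 0 < m + gm by lra.
have key : expR (2 * g * (x / (m + gm))) <= 1 + x * (expR (2 * g / (m + g)) - 1).
  apply: le_trans (chord_exp _ _); last by rewrite x0 x1.
  rewrite ler_expR.
  have iv : (m + gm)^-1 <= (m + g)^-1 by rewrite lef_pV2 ?posrE //; lra.
  have e1 : 2 * g * (x / (m + gm)) = (2 * g * x) * (m + gm)^-1 by ring.
  have e2 : x * (2 * g / (m + g)) = (2 * g * x) * (m + g)^-1 by ring.
  rewrite e1 e2; apply: ler_wpM2l => //.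
  by apply: mulr_ge0 => //; apply: mulr_ge0 => //; exact: ltW.
have -> : 2 * g * (x / (m + gm) - l) = 2 * g * (x / (m + gm)) + (- (2 * g)) * l by ring.
rewrite expRD.
set E := expR (- (2 * g) * l).
have E0 : 0 <= E := expR_ge0 _.
have h2 : z * (expR (2 * g * (x / (m + gm))) * E) <=
    z * ((1 + x * (expR (2 * g / (m + g)) - 1)) * E).
  by apply: ler_wpM2l => //; apply: ler_wpM2r.
apply: le_trans h2 _; rewrite le_eqVlt; apply/orP; left; apply/eqP; ring.
Qed.

Lemma step_b (z m l g : R) : 0 <= z -> 0 <= m -> 0 <= l -> 0 < g ->
  z * expR ((- (2 * g)) * l) + z * expR ((- (2 * g)) * l) * (expR (2 * g / (m + g)) - 1) * (m * l) <= z.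
Proof.
move=> z0 m0 l0 g0.
set E := expR (- (2 * g) * l).
set c := expR (2 * g / (m + g)) - 1.
have E0 : 0 <= E := expR_ge0 _.
have cm : m * c <= 2 * g by exact: cmu_le.
have h1 := expR_ge1Dx (2 * g * l).
have hE : E * expR (2 * g * l) = 1 by rewrite /E -expRD mulNr addNr expR0.
have h2 : 1 + m * c * l <= expR (2 * g * l).
  apply: le_trans h1; rewrite lerD2l; exact: ler_wpM2r.
have h3 : E * (1 + m * c * l) <= 1 by rewrite -[X in _ <= X]hE; exact: ler_wpM2l.
have -> : z * E + z * E * c * (m * l) = z * (E * (1 + m * c * l)) by ring.
by rewrite -[leRHS]mulr1; apply: ler_wpM2l.
Qed.

Lemma FmeasP (G : set (set Omega)) (f : Omega -> R) :
  sigma_algebra setT G ->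
  Fmeas G f <-> measurable_fun [set: g_sigma_algebraType G] (f : g_sigma_algebraType G -> R).
Proof.
move=> sG; split.
- move=> fG _ B mB; rewrite setTI /measurable /=.
  rewrite (sigma_algebra_id sG); exact: fG.
- move=> mf B mB; have := mf measurableT B mB.
  by rewrite setTI /measurable /= (sigma_algebra_id sG).
Qed.

Lemma Fmeas_meas (G : set (set Omega)) (f : Omega -> R) :
  G `<=` measurable -> Fmeas G f -> measurable_fun setT f.
Proof. by move=> GM fG _ B mB; rewrite setTI; apply: GM; exact: fG. Qed.


Local Open Scope ereal_scope.

Lemma condexp_mulW (P : probability Omega R) (G : set (set Omega)) (X Y W : Omega -> R) :
  G `<=` measurable ->
  measurable_fun setT X -> measurable_fun setT Y ->
  (forall w, (0 <= X w)%R) -> (forall w, (0 <= Y w <= 1)%R) ->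
  (forall A, G A -> \int[P]_(w in A) (X w)%:E = \int[P]_(w in A) (Y w)%:E) ->
  Fmeas G W -> (forall w, (0 <= W w)%R) ->
  \int[P]_(w in setT) ((W w * X w)%:E) <= \int[P]_(w in setT) ((W w * Y w)%:E).
Proof.
move=> GM mX mY X0 Y01 hXY WG W0.
have mW := Fmeas_meas GM WG.
apply/lee_addgt0Pr => e e0.
pose A k := [set w | (k%:R * e <= W w < k.+1%:R * e)%R].
have GA k : G (A k).
  have -> : A k = W @^-1` `[(k%:R * e)%R, (k.+1%:R * e)%R[%classic.
    by apply/seteqP; split => w /=; rewrite in_itv /=.
  by apply: WG; exact: measurable_itv.
have mA k : measurable (A k) by apply: GM.
have cover : \bigcup_k A k = setT.
  apply/seteqP; split => // w _.
  have := truncn_itv (divr_ge0 (W0 w) (ltW e0)).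
  move=> /andP[h1 h2].
  exists (Num.truncn (W w / e)) => //=.
  rewrite (ler_pdivlMr _ _ e0) in h1; rewrite (ltr_pdivrMr _ _ e0) in h2.
  by apply/andP; split.
have triv : trivIset setT A.
  move=> i j _ _ [w [/andP[hi1 hi2] /andP[hj1 hj2]]].
  have ij : (i%:R * e < j.+1%:R * e)%R := le_lt_trans hi1 hj2.
  have ji : (j%:R * e < i.+1%:R * e)%R := le_lt_trans hj1 hi2.
  rewrite (ltr_pM2r e0) ltr_nat in ij; rewrite (ltr_pM2r e0) ltr_nat in ji.
  by apply/eqP; rewrite eqn_leq -ltnS ij -ltnS ji.
have mE (f : Omega -> R) D : measurable_fun setT f -> measurable_fun D (EFin \o f).
  by move=> mf; apply/measurable_EFinP; exact: measurable_funTS.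
have intZ (c : R) (f : Omega -> R) D : measurable D -> (0 <= c)%R ->
    (forall w, 0 <= f w)%R -> measurable_fun setT f ->
    \int[P]_(w in D) ((c * f w)%R%:E) = c%:E * \int[P]_(w in D) (f w)%:E.
  move=> mD c0 f0 mf; rewrite -ge0_integralZl_EFin //.
  - by move=> w _; rewrite lee_fin.
  - exact: mE.
have mWX : measurable_fun setT (fun w => W w * X w)%R by apply: measurable_funM.
have mWY : measurable_fun setT (fun w => W w * Y w)%R by apply: measurable_funM.
have mWeY : measurable_fun setT (fun w => (W w + e) * Y w)%R.
  by apply: measurable_funM => //; apply: measurable_funD.
apply: (@le_trans _ _ (\int[P]_(w in setT) (((W w + e) * Y w)%R)%:E)).
  rewrite -cover !ge0_integral_bigcup //; last 4 first.
  - exact: mE.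
  - by move=> w _; rewrite lee_fin; apply: mulr_ge0 => //; [apply: addr_ge0 => //; exact: ltW | case/andP: (Y01 w)].
  - exact: mE.
  - by move=> w _; rewrite lee_fin; apply: mulr_ge0.
  apply: lee_nneseries => [i _ _|i _].
    by apply: integral_ge0 => w _; rewrite lee_fin; apply: mulr_ge0.
  have ci0 : (0 <= i.+1%:R * e)%R by apply: mulr_ge0 => //; exact: ltW.
  have mcX : measurable_fun setT (fun w => i.+1%:R * e * X w)%R.
    by apply: measurable_funM => //; exact: measurable_cst.
  have mcY : measurable_fun setT (fun w => i.+1%:R * e * Y w)%R.
    by apply: measurable_funM => //; exact: measurable_cst.
  apply: (@le_trans _ _ (\int[P]_(w in A i) ((i.+1%:R * e * X w)%R%:E))).
    apply: ge0_le_integral => //.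
    - by move=> w _; rewrite lee_fin; apply: mulr_ge0.
    - exact: mE.
    - exact: mE.
    - move=> w /andP[_ h]; rewrite lee_fin; apply: ler_wpM2r => //; exact: ltW.
  rewrite intZ // hXY // -intZ //; last by move=> w; case/andP: (Y01 w).
  apply: ge0_le_integral => //.
  - by move=> w _; rewrite lee_fin; apply: mulr_ge0 => //; case/andP: (Y01 w).
  - exact: mE.
  - exact: mE.
  - move=> w /andP[h _]; rewrite lee_fin; apply: ler_wpM2r; first by case/andP: (Y01 w).
    by rewrite -addn1 natrD mulrDl mul1r lerD2r.
under eq_integral do rewrite mulrDl EFinD.
rewrite ge0_integralD //; last 4 first.
- by move=> w _; rewrite lee_fin; apply: mulr_ge0 => //; case/andP: (Y01 w).
- exact: mE.
- by move=> w _; rewrite lee_fin; apply: mulr_ge0 => //; [exact: ltW | case/andP: (Y01 w)].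
- by apply: mE; apply: measurable_funM => //; exact: measurable_cst.
have hY1 : \int[P]_(w in setT) (Y w)%:E <= 1.
  apply: (@le_trans _ _ (\int[P]_(w in setT) (cst 1%E w))).
    apply: ge0_le_integral => //.
    - by move=> w _; rewrite lee_fin; case/andP: (Y01 w).
    - exact: mE.
    - by move=> w _; rewrite lee_fin; case/andP: (Y01 w).
  rewrite integral_cst // mul1e. exact: probability_le1.
apply: leeD2l.
rewrite intZ //; last 2 first.
- exact: ltW.
- by move=> w; case/andP: (Y01 w).
rewrite -[leRHS]mule1; apply: lee_wpmul2l => //; rewrite lee_fin; exact: ltW.
Qed.

End Helpers.

Theorem mainTheorem5 (R : realType) (d : measure_display) (Omega : measurableType d)
  (P : probability Omega R) (F : nat -> set (set Omega)) (T : nat)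
  (hit : nat -> set Omega) (r mu ell gamma : nat -> Omega -> R)
  (tau : Omega -> nat) (gamma' delta' : R) :
  filtration F ->
  F 0%N = [set set0; setT] ->
  (forall t, (1 <= t <= T)%N -> F t (hit t)) ->
  (forall t, (1 <= t <= T)%N -> Fmeas (F t) (r t)) ->
  (forall t w, (1 <= t <= T)%N -> 0 <= r t w <= 1) ->
  (forall t, (1 <= t <= T)%N -> Fmeas (F t.-1) (mu t)) ->
  (forall t w, (1 <= t <= T)%N -> 0 <= mu t w <= 1) ->
  (forall t, (1 <= t <= T)%N -> Fmeas (F t.-1) (ell t)) ->
  (forall t w, (1 <= t <= T)%N -> 0 <= ell t w <= 1) ->
  (forall t, (1 <= t <= T)%N ->
     is_cond_exp P (F t.-1) (fun w => \1_(hit t) w * (1 - r t w))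
                            (fun w => mu t w * ell t w)) ->
  (forall t, (1 <= t <= T)%N -> Fmeas (F t.-1) (gamma t)) ->
  (forall t w, (1 <= t <= T)%N -> 0 < gamma t w) ->
  stopping_time F tau ->
  (forall w, (tau w <= T)%N) ->
  0 < gamma' ->
  (forall t w, (1 <= t)%N -> (t <= tau w)%N -> gamma' <= gamma t w) ->
  0 < delta' < 1 ->
  ((1 - delta')%:E <=
   P [set w | (Ltilde hit r mu gamma (tau w) w - Lcum ell (tau w) w
               <= ln (delta'^-1) / (2 * gamma'))%R])%E.
Proof.
move=> hF hF0 hhit hr hr01 hmu hmu01 hell hell01 hce hgam hgam0 htau htauT g0 hgg hdel.
case: hF => hsig hsub hmono; clear hF0.
pose Ind k w : R := \1_[set w | (k <= tau w)%N] w.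
pose X k w : R := \1_(hit k) w * (1 - r k w).
pose Dk k w : R := Ind k w * (ltilde hit r mu gamma k w - ell k w).
pose S t w : R := \sum_(1 <= k < t.+1) Dk k w.
pose Z t w : R := expR (2 * gamma' * S t w).
have Fmono s t (f : Omega -> R) : (s <= t)%N -> Fmeas (F s) f -> Fmeas (F t) f.
  by move=> st fs B mB; apply: (hmono _ _ st); exact: fs.
have MFP t (f : Omega -> R) : Fmeas (F t) f <-> measurable_fun [set: g_sigma_algebraType (F t)] f.
  exact: FmeasP.
have Ival k w : Ind k w = if (k <= tau w)%N then 1 else 0.
  rewrite /Ind indicE; case: ifP => h; first by rewrite mem_set.
  by rewrite memNset //= h.
have hIm k : (1 <= k)%N -> Fmeas (F k.-1) (Ind k).
  move=> k1; apply/MFP; apply: measurable_indic; apply: gmeas_of (hsig _) _.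
  case: (hsig k.-1) => _ hC _.
  have := hC _ (htau k.-1).
  have -> : [set: Omega] `\` [set w | (tau w <= k.-1)%N] = [set w | (k <= tau w)%N].
    apply/seteqP; split=> w /=.
    - by move=> [_ /negP h]; lia.
    - by move=> h; split => //; apply/negP; lia.
  by [].
have hDm k : (1 <= k <= T)%N -> Fmeas (F k) (Dk k).
  move=> /andP[k1 kT].
  have kk : (k.-1 <= k)%N by lia.
  have kk' : (1 <= k <= T)%N by rewrite k1 kT.
  apply/MFP; rewrite /Dk /ltilde.
  apply: measurable_funM; first by apply/MFP; apply: (Fmono _ _ _ kk); exact: hIm.
  apply: measurable_funB; last by apply/MFP; apply: (Fmono _ _ _ kk); exact: hell.
  apply: measurable_funM.
    apply: measurable_funM.
      by apply: measurable_indic; apply: gmeas_of (hsig _) _; exact: hhit.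
    by apply: measurable_funB; [exact: measurable_cst | apply/MFP; exact: hr].
  apply: measurableT_comp; first exact: measurable_invR.
  by apply: measurable_funD; apply/MFP; apply: (Fmono _ _ _ kk); [exact: hmu | exact: hgam].
have S0 w : S 0%N w = 0 by rewrite /S big_geq.
have SrecE t w : S t.+1 w = S t w + Dk t.+1 w by rewrite /S big_nat_recr.
have hSm t : (t <= T)%N -> Fmeas (F t) (S t).
  elim: t => [_|t IH tT].
    apply/MFP; have -> : S 0%N = cst 0 by apply/funext => w; rewrite S0.
    exact: measurable_cst.
  have -> : S t.+1 = (fun w => S t w + Dk t.+1 w) by apply/funext => w; rewrite SrecE.
  apply/MFP; apply: measurable_funD; apply/MFP.
    by apply: (Fmono t); [exact: leqnSn | apply: IH; lia].
  by apply: hDm; lia.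
have hZm t : (t <= T)%N -> Fmeas (F t) (Z t).
  move=> tT; apply/MFP; apply: measurableT_comp; first exact: measurable_expR.
  by apply: measurable_funM; [exact: measurable_cst | apply/MFP; exact: hSm].
have Zge0 t w : 0 <= Z t w by exact: expR_ge0.
have mEf (f : Omega -> R) : measurable_fun setT f -> measurable_fun setT (EFin \o f).
  by move=> mf; apply/measurable_EFinP.
have hstep t : (t < T)%N ->
    (\int[P]_(w in setT) (Z t.+1 w)%:E <= \int[P]_(w in setT) (Z t w)%:E)%E.
  move=> tT.
  have t1T : (1 <= t.+1 <= T)%N by lia.
  have tT' : (t <= T)%N by lia.
  pose Xt w := X t.+1 w.
  pose Yt w := mu t.+1 w * ell t.+1 w.
  pose c w := expR (2 * gamma' / (mu t.+1 w + gamma')) - 1.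
  pose E w := expR ((- (2 * gamma')) * ell t.+1 w).
  pose B w := (1 - Ind t.+1 w) + Ind t.+1 w * E w.
  pose W w := Z t w * Ind t.+1 w * E w * c w.
  have Xt01 w : 0 <= Xt w <= 1.
    rewrite /Xt /X indicE; have /andP[r0 r1] := hr01 t.+1 w t1T.
    by case: (_ \in _) => /=; lra.
  have Yt01 w : 0 <= Yt w <= 1.
    have /andP[m0 m1] := hmu01 t.+1 w t1T; have /andP[l0 l1] := hell01 t.+1 w t1T.
    by rewrite /Yt; apply/andP; split; nra.
  have c0 w : 0 <= c w.
    rewrite /c subr_ge0; apply: le_trans (expR_ge1Dx _); rewrite lerDl.
    have /andP[m0 _] := hmu01 t.+1 w t1T.
    apply: divr_ge0; first by apply: mulr_ge0 => //; exact: ltW.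
    by apply: addr_ge0 => //; exact: ltW.
  have I01 w : Ind t.+1 w = 0 \/ Ind t.+1 w = 1 by rewrite Ival; case: ifP; [right|left].
  have W0 w : 0 <= W w.
    rewrite /W; apply: mulr_ge0 => //; apply: mulr_ge0; last exact: expR_ge0.
    by apply: mulr_ge0 => //; case: (I01 w) => ->.
  have B0 w : 0 <= B w by rewrite /B; case: (I01 w) => ->; rewrite ?subrr ?subr0 ?mul0r ?mul1r ?addr0 ?add0r // expR_ge0.
  have Ftm (f : Omega -> R) : Fmeas (F t) f -> measurable_fun setT f := Fmeas_meas (hsub t).
  have mI : Fmeas (F t) (Ind t.+1) by exact: (hIm t.+1).
  have mE : Fmeas (F t) E.
    apply/MFP; apply: measurableT_comp; first exact: measurable_expR.
    by apply: measurable_funM; [exact: measurable_cst | apply/MFP; exact: (hell t.+1)].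
  have mc : Fmeas (F t) c.
    apply/MFP; apply: measurable_funB; last exact: measurable_cst.
    apply: measurableT_comp; first exact: measurable_expR.
    apply: measurable_funM; first exact: measurable_cst.
    apply: measurableT_comp; first exact: measurable_invR.
    by apply: measurable_funD; [apply/MFP; exact: (hmu t.+1) | exact: measurable_cst].
  have mZ : Fmeas (F t) (Z t) by exact: hZm.
  have mB : Fmeas (F t) B.
    apply/MFP; apply: measurable_funD.
      by apply: measurable_funB; [exact: measurable_cst | apply/MFP].
    by apply: measurable_funM; apply/MFP.
  have mW : Fmeas (F t) W.
    apply/MFP; apply: measurable_funM; last by apply/MFP.
    apply: measurable_funM; last by apply/MFP.
    by apply: measurable_funM; apply/MFP.
  have mXt : measurable_fun setT Xt.
    apply: Fmeas_meas (hsub t.+1) _; apply/MFP; apply: measurable_funM.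
      by apply: measurable_indic; apply: gmeas_of (hsig _) _; exact: hhit.
    by apply: measurable_funB; [exact: measurable_cst | apply/MFP; exact: hr].
  have mYt : measurable_fun setT Yt.
    by apply: measurable_funM; apply: Ftm; [exact: (hmu t.+1) | exact: (hell t.+1)].
  have [_ hint] := hce t.+1 t1T.
  have L1 := condexp_mulW (hsub t) mXt mYt (fun w => proj1 (andP (Xt01 w))) Yt01 hint mW W0.
  have pw1 w : Z t.+1 w <= Z t w * B w + W w * Xt w.
    have /andP[m0 _] := hmu01 t.+1 w t1T.
    rewrite /Z SrecE /Dk /B /W Ival; case: ifP => h.
      rewrite subrr add0r !mul1r mulr1 mulrDr expRD.
      have := @step_a R _ _ _ _ _ _ (Zge0 t w) (Xt01 w) m0 g0 (hgg t.+1 w (ltn0Sn t) h).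
      rewrite /Z /E /c /Xt /X /ltilde; by apply.
    rewrite !(mul0r, mulr0, addr0, subr0, mulr1).
    by [].
  have pw2 w : Z t w * B w + W w * Yt w <= Z t w.
    have /andP[m0 _] := hmu01 t.+1 w t1T; have /andP[l0 _] := hell01 t.+1 w t1T.
    rewrite /B /W /Yt Ival; case: ifP => h.
      rewrite subrr add0r !mul1r mulr1.
      exact: (@step_b R _ _ _ _ (Zge0 t w) m0 l0 g0).
    by rewrite !(mul0r, mulr0, addr0, subr0, mulr1).
  have mZB : measurable_fun setT (fun w => Z t w * B w) by apply: measurable_funM; apply: Ftm.
  have mWX : measurable_fun setT (fun w => W w * Xt w) by apply: measurable_funM => //; apply: Ftm.
  have mWY : measurable_fun setT (fun w => W w * Yt w) by apply: measurable_funM => //; apply: Ftm.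
  apply: (@le_trans _ _ (\int[P]_(w in setT) ((Z t w * B w + W w * Xt w)%:E))%E).
    apply: ge0_le_integral => //.
    - by move=> w _; rewrite lee_fin.
    - by apply/mEf/(Fmeas_meas (hsub t.+1)); apply: hZm.
    - by apply/mEf; exact: measurable_funD.
    - by move=> w _; rewrite lee_fin; exact: pw1.
  under eq_integral do rewrite EFinD.
  rewrite ge0_integralD //; last 4 first.
  - by move=> w _; rewrite lee_fin; exact: mulr_ge0.
  - exact: mEf.
  - by move=> w _; rewrite lee_fin; apply: mulr_ge0 => //; case/andP: (Xt01 w).
  - exact: mEf.
  apply: (@le_trans _ _ (\int[P]_(w in setT) (Z t w * B w)%:E + \int[P]_(w in setT) (W w * Yt w)%:E)%E).
    exact: leeD2l.
  rewrite -ge0_integralD //; last 4 first.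
  - by move=> w _; rewrite lee_fin; exact: mulr_ge0.
  - exact: mEf.
  - by move=> w _; rewrite lee_fin; apply: mulr_ge0 => //; case/andP: (Yt01 w).
  - exact: mEf.
  under eq_integral do rewrite -EFinD.
  apply: ge0_le_integral => //.
  - by move=> w _; rewrite lee_fin; apply: addr_ge0; apply: mulr_ge0 => //; case/andP: (Yt01 w).
  - by apply/mEf; exact: measurable_funD.
  - by apply/mEf; apply: Ftm.
  - by move=> w _; rewrite lee_fin; exact: pw2.
have hZ1 t : (t <= T)%N -> (\int[P]_(w in setT) (Z t w)%:E <= 1)%E.
  elim: t => [_|t IH tT].
    have -> : (fun w => (Z 0%N w)%:E) = cst 1%E.
      by apply/funext => w; rewrite /Z S0 mulr0 expR0.
    by rewrite integral_cst // mul1e; exact: probability_le1.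
  apply: le_trans (hstep t tT) _; apply: IH; lia.
have hsum w : Ltilde hit r mu gamma (tau w) w - Lcum ell (tau w) w = S T w.
  rewrite /Ltilde /Lcum /S -sumrB.
  have tw := htauT w.
  rewrite (@big_cat_nat _ _ _ (tau w).+1 1 T.+1) //=.
  rewrite [Q in _ = _ + Q]big_nat_cond [Q in _ = _ + Q]big1 ?addr0; last first.
    move=> i /andP[/andP[hi1 hi2] _]; rewrite /Dk Ival.
    have -> : (i <= tau w)%N = false by lia.
    by rewrite mul0r.
  apply: eq_big_nat => i /andP[i1 i2]; rewrite /Dk Ival.
  have -> : (i <= tau w)%N = true by lia.
  by rewrite mul1r.
case/andP: hdel => d0 d1.
set c0 := ln delta'^-1 / (2 * gamma').
pose A := [set w | S T w <= c0].
have -> : [set w | Ltilde hit r mu gamma (tau w) w - Lcum ell (tau w) w <= c0] = A.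
  by apply/seteqP; split => w /=; rewrite hsum.
have mST : measurable_fun setT (S T) := Fmeas_meas (hsub T) (hSm T (leqnn T)).
have mA : measurable A.
  have -> : A = S T @^-1` `]-oo, c0] by apply/seteqP; split => w; rewrite /= in_itv /=.
  by have := mST measurableT _ (measurable_itv `]-oo, c0]); rewrite setTI.
have mCA : measurable (~` A) := measurableC mA.
have [p hp] : exists p, P (~` A) = p%:E.
  by exists (fine (P (~` A))); rewrite fineK //; exact: fin_num_measure.
have p0 : 0 <= p by rewrite -lee_fin -hp; exact: measure_ge0.
have dpos : 0 < delta'^-1 by rewrite invr_gt0.
have e0 : expR (2 * gamma' * c0) = delta'^-1.
  have -> : 2 * gamma' * c0 = ln delta'^-1 by rewrite /c0; field; lra.
  by rewrite lnK // posrE.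
have hmark : ((delta'^-1 * p)%:E <= 1)%E.
  apply: le_trans (hZ1 T (leqnn T)).
  have -> : (delta'^-1 * p)%:E = (\int[P]_(w in setT) (delta'^-1 * \1_(~` A) w)%:E)%E.
    under eq_integral do rewrite EFinM.
    rewrite ge0_integralZl_EFin //; try (by rewrite integral_indic // setIT hp EFinM);
      try (by move=> w _; rewrite lee_fin); try (by apply/mEf; exact: measurable_indic);
      try exact: ltW.
  rewrite integral_indic // setIT EFinM; congr (_ * _)%E; apply/esym; exact: hp.
  apply: ge0_le_integral => //.
  - by move=> w _; rewrite lee_fin; apply: mulr_ge0; [exact: ltW | by rewrite indicE ler0n].
  - by apply/mEf; apply: measurable_funM; [exact: measurable_cst | exact: measurable_indic].
  - by apply/mEf/(Fmeas_meas (hsub T)); apply: hZm.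
  move=> w _; rewrite lee_fin indicE.
  case: (boolP (w \in ~` A)) => h; last by rewrite mulr0.
  rewrite mulr1 -e0 /Z ler_expR.
  rewrite in_setE /A /= in h.
  apply: ler_wpM2l; first by apply: mulr_ge0 => //; exact: ltW.
  by apply: ltW; rewrite ltNge; apply/negP.
have pd : p <= delta'.
  have := hmark; rewrite lee_fin => h.
  have -> : p = delta' * (delta'^-1 * p) by field; lra.
  by rewrite -[leRHS]mulr1; apply: ler_wpM2l => //; exact: ltW.
have PA : P A = (1 - p)%:E.
  by have := probability_setC P mCA; rewrite setCK hp => ->; rewrite EFinB.
by rewrite PA lee_fin; lra.
Qed.
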